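(* Let $j\neq k$ be jobs with $\sigma_j<\sigma_k$ such that $(j,k)$ is not a red pair. Then, in the schedule produced by $1$-SORT, \[ D(j,k)\le\max\left\{\frac{2\mu+1}{\mu+1},\,1+\nu\right\}\cdot D^*(j,k). \]
   Context: Setting: single machine, jobs $J=\{1,\dots,n\}$, each job $j$ with test time $t_j\ge0$ and processing time $p_j\ge0$ (revealed only when the test is executed); each job's test must be executed before its processing part, which may start any time after the test; operations are non-preemptive and the machine does one at a time. $\sigma_j=t_j+p_j$, $m_j=\max\{t_j,p_j\}$. Standing assumption (general position): no two of the $3n$ numbers $t_1,\dots,t_n,p_1,\dots,p_n,\sigma_1,\dots,\sigma_n$ are equal. Algorithm $1$-SORT: keep a priority queue of available operations, initially the test of every job $j$ with priority $t_j$; repeatedly remove a minimum-priority operation and execute it immediately; after executing the test of $j$, insert the processing part of $j$ with priority $p_j$. For a schedule and distinct jobs $j,k$, let $d_{k,j}$ be the total amount of time during which operations (test and/or processing part) of $k$ are executed before the completion time of $j$, and $D(j,k)=d_{j,k}+d_{k,j}$, evaluated for the $1$-SORT schedule. Let $D^*(j,k)=\min\{\sigma_j,\sigma_k\}$ (the corresponding quantity in an optimal schedule). Fix constants $\mu>1$ and $0<\nu<1$ with $\mu\nu>1$ and $1+\frac1\mu\le\nu+\nu^2$. A job $j$ is imbalanced if $m_j\ge\mu\min\{t_j,p_j\}$. For distinct jobs $j,k$, the ordered pair $(j,k)$ is a red pair if $j$ is imbalanced, $m_j\ge t_k\ge\nu m_j$, and $p_k\ge\nu t_k$. *)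

(* Defs.v *)
From HB Require Import structures.
From mathcomp Require Import all_boot all_order all_algebra.
Set Implicit Arguments. Unset Strict Implicit. Unset Printing Implicit Defensive.
Import Order.TTheory GRing.Theory Num.Theory.
Local Open Scope ring_scope.

Section OneSort.
Variables (R : realFieldType) (n : nat) (t p : 'I_n -> R).

(* An operation: (j, false) = test of job j, (j, true) = processing part of j. *)
Definition op := ('I_n * bool)%type.

(* Length of an operation; in 1-SORT it is also its priority. *)
Definition op_len (o : op) : R := if o.2 then p o.1 else t o.1.

Definition sigma (j : 'I_n) : R := t j + p j.
Definition mj (j : 'I_n) : R := Num.max (t j) (p j).

Definition argmin_op (o : op) (s : seq op) : op :=
  foldl (fun a b => if op_len b < op_len a then b else a) o s.

(* One step of 1-SORT: state = (priority queue, operations executed so far,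
   in execution order). *)
Definition sort_step (st : seq op * seq op) : seq op * seq op :=
  let: (q, sched) := st in
  match q with
  | [::] => st
  | o :: q' =>
      let m := argmin_op o q' in
      (rem m q ++ (if m.2 then [::] else [:: (m.1, true)]), rcons sched m)
  end.

(* The sequence of operations executed by 1-SORT (each started immediately
   after the previous one, with no idle time). *)
Definition one_sort_schedule : seq op :=
  (iter (2 * n) sort_step ([seq (j, false) | j <- enum 'I_n], [::])).2.

(* d k j: total time during which operations of k are executed before the
   completion time of j (= end of the processing part of j).  Operations are
   non-preemptive and executed back-to-back, so these are exactly the
   operations of k preceding (j, true) in the execution order. *)
Definition dd (k j : 'I_n) : R :=
  let s := one_sort_schedule in
  \sum_(o <- take (index (j, true) s) s | o.1 == k) op_len o.

Definition DD (j k : 'I_n) : R := dd j k + dd k j.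

Definition Dstar (j k : 'I_n) : R := Num.min (sigma j) (sigma k).

(* General position: the 3n numbers t_i, p_i, sigma_i are pairwise distinct. *)
Definition num3 (c : 'I_3) (i : 'I_n) : R :=
  if nat_of_ord c == 0%N then t i else if nat_of_ord c == 1%N then p i else sigma i.

Definition general_position : Prop :=
  forall (c c' : 'I_3) (i i' : 'I_n), num3 c i = num3 c' i' -> c = c' /\ i = i'.

Definition imbalanced (mu : R) (j : 'I_n) : Prop :=
  mj j >= mu * Num.min (t j) (p j).

Definition red_pair (mu nu : R) (j k : 'I_n) : Prop :=
  [/\ j != k, imbalanced mu j, mj j >= t k, t k >= nu * mj j & p k >= nu * t k].

End OneSort.

(* Main.v *)
Require Import Defs.
From mathcomp Require Import all_boot all_order all_algebra.
From mathcomp Require Import lra.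
Import Order.TTheory GRing.Theory Num.Theory.
Set Implicit Arguments. Unset Strict Implicit. Unset Printing Implicit Defensive.
Local Open Scope ring_scope.

Definition Kk (R : realFieldType) (n : nat) (t p : 'I_n -> R) (o : op n) : R :=
  if o.2 then mj t p o.1 else t o.1.

Definition ltop (R : realFieldType) (n : nat) (t p : 'I_n -> R) (o o' : op n) : bool :=
  (Kk t p o < Kk t p o') || ((Kk t p o == Kk t p o') && ~~ o.2 && o'.2).

Lemma gp_tt (R : realFieldType) (n : nat) (t p : 'I_n -> R) :
  general_position t p -> forall i i', t i = t i' -> i = i'.
Proof. by move=> gp i i' h; case: (gp (@Ordinal 3 0 isT) (@Ordinal 3 0 isT) i i' h). Qed.

Lemma gp_pp (R : realFieldType) (n : nat) (t p : 'I_n -> R) :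
  general_position t p -> forall i i', p i = p i' -> i = i'.
Proof. by move=> gp i i' h; case: (gp (@Ordinal 3 1 isT) (@Ordinal 3 1 isT) i i' h). Qed.

Lemma gp_tp (R : realFieldType) (n : nat) (t p : 'I_n -> R) :
  general_position t p -> forall i i', t i <> p i'.
Proof. by move=> gp i i' h; case: (gp (@Ordinal 3 0 isT) (@Ordinal 3 1 isT) i i' h). Qed.

Lemma mj_cases (R : realFieldType) (n : nat) (t p : 'I_n -> R) i :
  mj t p i = t i \/ mj t p i = p i.
Proof. by rewrite /mj; case: (leP (t i) (p i)); [right|left]. Qed.

Lemma K_inj (R : realFieldType) (n : nat) (t p : 'I_n -> R) :
  general_position t p -> forall o o' : op n, Kk t p o = Kk t p o' -> o.1 = o'.1.
Proof.
move=> gp [i b] [i' b']; rewrite /Kk /=.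
have tt := gp_tt gp; have pp := gp_pp gp; have tp := gp_tp gp.
case: b; case: b'; rewrite /=;
  try (case: (mj_cases t p i) => ->); try (case: (mj_cases t p i') => ->);
  move=> h; try by [apply: tt | apply: pp | exfalso; apply: (tp _ _ h) | exfalso; apply: (tp _ _ (esym h))].
Qed.

Lemma t_le_mj (R : realFieldType) (n : nat) (t p : 'I_n -> R) i : t i <= mj t p i.
Proof. by rewrite /mj le_max lexx. Qed.

Lemma len_le_K (R : realFieldType) (n : nat) (t p : 'I_n -> R) (o : op n) :
  op_len t p o <= Kk t p o.
Proof. by case: o => i [|]; rewrite /op_len /Kk //= /mj le_max lexx orbT. Qed.

Lemma ltop_irr (R : realFieldType) (n : nat) (t p : 'I_n -> R) o : ltop t p o o = false.
Proof. by rewrite /ltop ltxx eqxx /=; case: (o.2). Qed.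

Lemma ltop_K (R : realFieldType) (n : nat) (t p : 'I_n -> R) o o' :
  ltop t p o o' -> Kk t p o <= Kk t p o'.
Proof. by case/orP => [/ltW //|/andP [/andP [/eqP -> _] _]]. Qed.

Lemma ltop_trans (R : realFieldType) (n : nat) (t p : 'I_n -> R) o1 o2 o3 :
  ltop t p o1 o2 -> ltop t p o2 o3 -> ltop t p o1 o3.
Proof.
rewrite /ltop => /orP [h12|/andP [/andP [/eqP e12 n1] b2]] /orP [h23|/andP [/andP [/eqP e23 n2] b3]].
- by rewrite (lt_trans h12 h23).
- by rewrite -e23 h12.
- by rewrite e12 h23.
- by rewrite b2 in n2.
Qed.

Lemma ltop_asym (R : realFieldType) (n : nat) (t p : 'I_n -> R) o o' :
  ltop t p o o' -> ltop t p o' o = false.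
Proof.
move=> h; apply/negbTE/negP => h'.
by have := ltop_trans h h'; rewrite ltop_irr.
Qed.

Lemma ltop_total (R : realFieldType) (n : nat) (t p : 'I_n -> R) :
  general_position t p -> forall o o' : op n, o != o' -> ltop t p o o' || ltop t p o' o.
Proof.
move=> gp o o' ne; rewrite /ltop.
case: (ltgtP (Kk t p o) (Kk t p o')) => //= e.
have e1 := K_inj gp e.
move: ne e1 e; case: o => i b; case: o' => i' b' /= ne e1; subst i'.
by case: b ne; case: b' => //; rewrite eqxx.
Qed.

Lemma ltop_pt (R : realFieldType) (n : nat) (t p : 'I_n -> R) i :
  ltop t p (i, true) (i, false) = false.
Proof.
rewrite /ltop /Kk /= andbF orbF; apply/negbTE; rewrite -leNgt; exact: t_le_mj.
Qed.

Lemma ltop_tp (R : realFieldType) (n : nat) (t p : 'I_n -> R) i :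
  ltop t p (i, false) (i, true).
Proof.
rewrite /ltop /Kk /=; have := t_le_mj t p i.
by rewrite le_eqVlt => /orP [/eqP ->|->]; rewrite ?eqxx ?orbT.
Qed.

Lemma argminP (R : realFieldType) (n : nat) (t p : 'I_n -> R) (s : seq (op n)) :
  forall o, argmin_op t p o s \in o :: s /\
    forall x, x \in o :: s -> op_len t p (argmin_op t p o s) <= op_len t p x.
Proof.
rewrite /argmin_op; elim: s => [|x s IH] o /=.
  by split; [rewrite mem_seq1 | move=> x; rewrite mem_seq1 => /eqP ->].
set f := (fun a b : op n => if op_len t p b < op_len t p a then b else a).
have [h1 h2] := IH (f o x).
have hf : f o x \in [:: o; x] by rewrite /f; case: ifP; rewrite !inE eqxx ?orbT.
have hfo : op_len t p (f o x) <= op_len t p o by rewrite /f; case: ifP => // /ltW.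
have hfx : op_len t p (f o x) <= op_len t p x.
  by rewrite /f; case: ifP => //; move/negbT; rewrite -leNgt.
split.
  move: h1; rewrite inE => /orP [/eqP ->|h]; first by move: hf; rewrite !inE => /orP [->|->]; rewrite ?orbT.
  by rewrite !inE h !orbT.
move=> y; rewrite !inE => /orP [/eqP ->|/orP [/eqP ->|hy]].
- by apply: le_trans (h2 _ _) hfo; rewrite inE eqxx.
- by apply: le_trans (h2 _ _) hfx; rewrite inE eqxx.
- by apply: h2; rewrite inE hy orbT.
Qed.

Definition Inv (R : realFieldType) (n : nat) (t p : 'I_n -> R) (q s : seq (op n)) : Prop :=
  [/\ uniq s, pairwise (ltop t p) s,
      (forall o o', o \in s -> o' \notin s -> ltop t p o o'), uniq q &
      forall o : op n, (o \in q) = (o \notin s) && (~~ o.2 || ((o.1, false) \in s))].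

Lemma inv_proc (R : realFieldType) (n : nat) (t p : 'I_n -> R) q s i :
  Inv t p q s -> (i, true) \in s -> (i, false) \in s.
Proof.
case=> _ _ hB _ _ hi; apply/negPn/negP => hn.
by have := hB _ _ hi hn; rewrite ltop_pt.
Qed.

Lemma inv_qclaim (R : realFieldType) (n : nat) (t p : 'I_n -> R) q s :
  general_position t p -> Inv t p q s ->
  forall o o', o \in q -> o' \in q -> ltop t p o o' -> op_len t p o < op_len t p o'.
Proof.
move=> gp inv; have [hU hP hB hUq hQ] := inv.
move=> o o' hoq ho'q hlt.
have hos : o \notin s by move: hoq; rewrite hQ => /andP [].
have ho's : o' \notin s by move: ho'q; rewrite hQ => /andP [].
have e3 : Kk t p o < Kk t p o'.
  rewrite lt_neqAle ltop_K // andbT; apply/eqP => ek.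
  have ei := K_inj gp ek.
  move: hlt; rewrite /ltop ek ltxx eqxx /= => /andP [hb hb'].
  move: ho'q hoq ei hb hb' hos ho's ek; case: o => i b; case: o' => i' b' /= hq' hq ei hb hb' _ _ _.
  subst i'; move: hb hb' hq' hq; case: b' => //; case: b => // _ _.
  by rewrite !hQ /= => /andP [_ ->].
have e1 : op_len t p o' = Kk t p o'.
  move: ho'q hlt e3; case: o' ho's => i' [|] ho's; rewrite /op_len /Kk //=.
  rewrite hQ /= => /andP [_ hts] hlt _.
  rewrite /mj; case: (leP (t i') (p i')) => // hpt; exfalso.
  have h1 := hB _ _ hts hos.
  have k1 := ltop_K h1; have k2 := ltop_K hlt.
  move: k1 k2; rewrite /Kk /= /mj (max_l (ltW hpt)) => k1 k2.
  have ek : Kk t p o = Kk t p (i', false) by rewrite /Kk /=; apply/eqP; rewrite eq_le k2 k1.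
  have ei := K_inj gp ek; clear k1 k2; move: h1 hlt hos ek hoq; case: o ei => i b /= ->.
  case: b => _; last by rewrite hts.
  by rewrite ltop_irr.
have e2 := len_le_K t p o.
by rewrite e1; apply: le_lt_trans e3.
Qed.

Lemma inv_step (R : realFieldType) (n : nat) (t p : 'I_n -> R) o0 q' s :
  general_position t p -> Inv t p (o0 :: q') s ->
  Inv t p (rem (argmin_op t p o0 q') (o0 :: q') ++
           (if (argmin_op t p o0 q').2 then [::] else [:: ((argmin_op t p o0 q').1, true)]))
      (rcons s (argmin_op t p o0 q')).
Proof.
move=> gp inv; have [hU hP hB hUq hQ] := inv.
have [hm hmin] := argminP t p q' o0.
move: (argmin_op t p o0 q') hm hmin => m hm hmin.
set q := o0 :: q' in hm hmin hUq hQ inv *; clearbody q.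
have hms : m \notin s by move: hm; rewrite hQ => /andP [].
have inq : forall x, x \in q -> x != m -> ltop t p m x.
  move=> x hx hxm; case/orP: (ltop_total gp hxm) => h //.
  have := inv_qclaim gp inv hx hm h; have := hmin x hx.
  by rewrite leNgt => /negbTE ->.
have key : forall o', o' \notin s -> o' != m -> ltop t p m o'.
  move=> o' ho' hne.
  case hq: (o' \in q); first exact: inq.
  move: hq; rewrite hQ ho' /= => /negbT; rewrite negb_or negbK => /andP [hb hts].
  have ho''q : (o'.1, false) \in q by rewrite hQ hts.
  have h1 : ltop t p (o'.1, false) o'.
    by move: hb; case: o' {ho' hne hts ho''q} => i [] //= _; apply: ltop_tp.
  case: (eqVneq (o'.1, false) m) => e; first by rewrite -e.
  exact: ltop_trans (inq _ ho''q e) h1.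
split.
- by rewrite rcons_uniq hms hU.
- rewrite pairwise_rcons hP andbT; apply/allP => o ho; exact: hB o m ho hms.
- move=> o o'; rewrite !mem_rcons !inE => /orP [/eqP ->|ho]; rewrite negb_or => /andP [hne ho'].
    exact: key.
  exact: hB.
- rewrite cat_uniq rem_uniq //; case hb: (m.2); first by [].
  have hr : forall x, x \in rem m q -> x \in q by move=> x; apply: mem_rem.
  move: (rem m q) hr => r hr; rewrite /= andbT orbF.
  apply/negP => /hr; rewrite hQ /= => /andP [_].
  by move: hms hb; case: m {hm hmin inq key hr} => i [] // hms _ h; rewrite h in hms.
- move=> [i b]; rewrite mem_cat (mem_rem_uniq _ hUq) !mem_rcons !inE hQ /=.
  move: hms hm; case: m {hmin inq key} => i' b' hms hm.
  have hp := @inv_proc _ _ t p _ _ i inv.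
  case: b' hms hm => hms hm; rewrite /= ?inE !xpair_eqE.
  all: case: (eqVneq i i') => [ei|ne]; rewrite /= ?andbT ?andbF ?orbF.
  all: try subst i'.
  all: case: b; case hts: ((i, true) \in s); case hfs: ((i, false) \in s) => //=.
  all: try by rewrite hfs in hms.
  all: try by move: (hp hts); rewrite hfs.
Qed.

Lemma inv0 (R : realFieldType) (n : nat) (t p : 'I_n -> R) :
  Inv t p [seq (j, false) | j <- enum 'I_n] [::].
Proof.
split => //.
- rewrite map_inj_uniq ?enum_uniq //; by move=> x y [].
- move=> [i [|]] /=.
    by apply/mapP => [[j _ e]].
  by apply/mapP; exists i; rewrite ?mem_enum.
Qed.

Lemma step_ok (R : realFieldType) (n : nat) (t p : 'I_n -> R) (k : nat) st :
  general_position t p -> Inv t p st.1 st.2 ->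
  (size st.2 = k \/ forall o, o \in st.2) ->
  Inv t p (sort_step t p st).1 (sort_step t p st).2 /\
  (size (sort_step t p st).2 = k.+1 \/ forall o, o \in (sort_step t p st).2).
Proof.
move=> gp; case: st => [[|o0 q'] s] /= inv hs.
- split => //; right => o; apply/negPn/negP => ho.
  have [_ _ _ _ hQ] := inv.
  have h1 := hQ o; rewrite in_nil ho /= in h1.
  have h2 := hQ (o.1, false); rewrite in_nil /= in h2.
  move: h2; rewrite /= andbT => /esym/negbFE hf.
  by rewrite hf orbT in h1.
- split; first exact: inv_step.
  case: hs => [hs|hs]; first by left; rewrite size_rcons hs.
  by right => o; rewrite mem_rcons inE hs orbT.
Qed.

Lemma iter_ok (R : realFieldType) (n : nat) (t p : 'I_n -> R) (k : nat) :
  general_position t p ->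
  let st := iter k (sort_step t p) ([seq (j, false) | j <- enum 'I_n], [::]) in
  Inv t p st.1 st.2 /\ (size st.2 = k \/ forall o, o \in st.2).
Proof.
move=> gp; elim: k => [|k IH] /=; first by split; [exact: inv0 | left].
by case: IH => h1 h2; apply: step_ok.
Qed.

Lemma sched_ok (R : realFieldType) (n : nat) (t p : 'I_n -> R) :
  general_position t p ->
  [/\ uniq (one_sort_schedule t p), pairwise (ltop t p) (one_sort_schedule t p) &
      forall o, o \in one_sort_schedule t p].
Proof.

move=> gp; have [[hU hP _ _ _] hs] := @iter_ok _ _ t p (2 * n) gp.
rewrite /one_sort_schedule; split => //.
case: hs => // hs o; apply/negPn/negP => ho.
have : (size (o :: (iter (2 * n) (sort_step t p) ([seq (j, false) | j <- enum 'I_n], [::])).2)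
   <= size (enum (predT : {pred ('I_n * bool)})))%N.
  apply: uniq_leq_size; first by rewrite /= ho hU.
  by move=> x _; rewrite mem_enum.
by rewrite /= hs -cardE card_prod card_ord card_bool mulnC ltnn.
Qed.

Lemma pre_mem (R : realFieldType) (n : nat) (t p : 'I_n -> R) (s : seq (op n)) x y :
  general_position t p -> uniq s -> pairwise (ltop t p) s -> x \in s -> y \in s -> x != y ->
  (x \in take (index y s) s) = ltop t p x y.
Proof.
move=> gp hU hP hx hy ne.
rewrite in_take //.
have hxs := index_mem x s; have hys := index_mem y s.
rewrite hx in hxs; rewrite hy in hys.
case: (ltngtP (index x s) (index y s)) => h.
- by have := (pairwiseP x hP) _ _ hxs hys h; rewrite !nth_index.
- have := (pairwiseP x hP) _ _ hys hxs h; rewrite !nth_index // => h'.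
  by rewrite (ltop_asym h').
- by move: (congr1 (nth x s) h); rewrite !nth_index // => e; rewrite e eqxx in ne.
Qed.

Lemma dd_eq (R : realFieldType) (n : nat) (t p : 'I_n -> R) (k j : 'I_n) :
  general_position t p -> k != j ->
  dd t p k j = (if ltop t p (k, false) (j, true) then t k else 0)
             + (if ltop t p (k, true) (j, true) then p k else 0).
Proof.
move=> gp kj; rewrite /dd; have [hU hP hall] := sched_ok gp.
set s := one_sort_schedule t p.
have hpre : forall x, x != (j, true) -> (x \in take (index (j, true) s) s) = ltop t p x (j, true).
  by move=> x hx; apply: pre_mem.
rewrite big_mkcond big_uniq ?take_uniq //= big_mkcond /=.
rewrite (bigD1 (k, false)) //= (bigD1 (k, true)) //=.
set S := \big[_/_]_(i | _) _.
have -> : S = 0.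
  rewrite /S; apply: big1.
  move=> [i b] /andP [h1 h2]; case: ifP => // _; case: ifP => //= /eqP ei; subst i.
  by case: b h1 h2; rewrite eqxx.
rewrite addr0 /op_len /=.
rewrite !hpre ?eqxx //.
all: by rewrite xpair_eqE ?(negbTE kj) ?eqxx.
Qed.
Lemma arith (R : realFieldType) (a b x y mu nu : R) :
  0 <= a -> 0 <= b -> 0 <= x -> 0 <= y -> 1 < mu -> 0 < nu -> nu < 1 ->
  a <> x -> a <> y -> b <> x -> b <> y -> a + b < x + y ->
  ~ [/\ mu * Num.min a b <= Num.max a b, x <= Num.max a b,
        nu * Num.max a b <= x & nu * x <= y] ->
  (if (a < Num.max x y) || (a == Num.max x y) then a else 0)
  + (if Num.max a b < Num.max x y then b else 0)
  + ((if (x < Num.max a b) || (x == Num.max a b) then x else 0)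
     + (if Num.max x y < Num.max a b then y else 0))
  <= Num.max ((2 * mu + 1) / (mu + 1)) (1 + nu) * Num.min (a + b) (x + y).
Proof.
move=> a0 b0 x0 y0 mu1 nu0 nu1 ax ay bx byy sab nred.
set c1 := (2 * mu + 1) / (mu + 1).
set C := Num.max c1 (1 + nu).
have hC1 : c1 <= C by rewrite le_max lexx.
have hC2 : 1 + nu <= C by rewrite le_max lexx orbT.
have hz : forall z, z * (mu + 1) <= (2 * mu + 1) * (a + b) -> z <= C * (a + b).
  move=> z hz; apply: (@le_trans _ _ (c1 * (a + b))); last by apply: ler_wpM2r => //; lra.
  rewrite /c1 mulrAC ler_pdivlMr //; lra.
have hz2 : forall z, z <= (1 + nu) * (a + b) -> z <= C * (a + b).
  move=> z hz2; apply: le_trans hz2 _; apply: ler_wpM2r => //; lra.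
have -> : Num.min (a + b) (x + y) = a + b by apply/min_idPl; lra.
have nred' : (Num.max a b < mu * Num.min a b) \/ (Num.max a b < x) \/
   (x < nu * Num.max a b) \/ (y < nu * x).
  case: (ltP (Num.max a b) (mu * Num.min a b)) => h1; first by left.
  case: (ltP (Num.max a b) x) => h2; first by right; left.
  case: (ltP x (nu * Num.max a b)) => h3; first by right; right; left.
  case: (ltP y (nu * x)) => h4; first by right; right; right.
  by exfalso; apply: nred.
clear nred.
rewrite !(orbC (_ < _)) -!le_eqVlt.
have hMj : [/\ a <= Num.max a b, b <= Num.max a b, Num.min a b + Num.max a b = a + b,
   0 <= Num.min a b & (Num.max a b = a /\ Num.min a b = b) \/ (Num.max a b = b /\ Num.min a b = a)].
  by case: (leP a b) => h; split; try lra; by [left|right].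
have hMk : [/\ x <= Num.max x y, y <= Num.max x y & Num.max x y = x \/ Num.max x y = y].
  by case: (leP x y) => h; split; try lra; by [left|right].
move: hMj hMk nred'; clearbody C.
move: (Num.max a b) (Num.min a b) (Num.max x y) => Mj mn Mk [haM hbM hmn mn0 hM] [hxM hyM hK] nred.
have hne : Mj != Mk.
  by apply/eqP; case: hM => [[->]|[->]] _; case: hK => ->.
case: (ltgtP Mj Mk) => hjk; last by rewrite hjk eqxx in hne.
- have h1 : a <= Mk by apply: le_trans haM (ltW hjk).
  rewrite h1 ?hjk ?(lt_gtF hjk) ?addr0. idtac.
  case: ifP => hx; last first.
    rewrite addr0; apply: hz2; nra.
  case: nred => [h|[h|[h|h]]].
  + apply: hz.
    have : (Mj - x) * mu >= 0 by apply: mulr_ge0; lra.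
    nra.
  + lra.
  + apply: hz2.
    have : nu * (a + b - Mj) >= 0 by apply: mulr_ge0; lra.
    lra.
  + have : y < x by nra.
    case: hK => hK; lra.
- have h3 : x <= Mj by lra.
  rewrite h3 addr0.
  case: ifP => ha.
  + have [hb hm] : Mj = b /\ mn = a by case: hM => [[? ?]|//]; lra.
    subst Mj mn.
    case: nred => [h|[h|[h|h]]].
    * apply: hz.
      have : (2 * b - x - y) * (mu + 1) >= 0 by apply: mulr_ge0; lra.
      nra.
    * lra.
    * apply: hz2.
      have : nu * a >= 0 by apply: mulr_ge0; lra.
      nra.
    * apply: hz2.
      have : nu * a >= 0 by apply: mulr_ge0; lra.
      have : nu * (b - x) >= 0 by apply: mulr_ge0; lra.
      nra.
  + move/negbT: ha; rewrite -ltNge => ha.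
    rewrite add0r.
    case: nred => [h|[h|[h|h]]].
    * case: hM => [[? ?]|[? ?]]; subst Mj mn.
      - apply: hz.
        have : (2 * a - x - y) * (mu + 1) >= 0 by apply: mulr_ge0; lra.
        nra.
      - apply: hz2.
        have : nu * (a + b) >= 0 by apply: mulr_ge0; lra.
        nra.
    * lra.
    * apply: hz2.
      have : nu * (a + b - Mj) >= 0 by apply: mulr_ge0; lra.
      nra.
    * apply: hz2.
      have : nu * (a - x) >= 0 by apply: mulr_ge0; lra.
      have : nu * b >= 0 by apply: mulr_ge0; lra.
      nra.
Qed.

Theorem mainTheorem4 (R : realFieldType) (n : nat) (t p : 'I_n -> R)
  (mu nu : R) (j k : 'I_n) :
  (forall i, 0 <= t i) -> (forall i, 0 <= p i) ->
  general_position t p ->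
  1 < mu -> 0 < nu -> nu < 1 -> 1 < mu * nu -> 1 + mu^-1 <= nu + nu ^+ 2 ->
  j != k -> sigma t p j < sigma t p k ->
  ~ red_pair t p mu nu j k ->
  DD t p j k <= Num.max ((2 * mu + 1) / (mu + 1)) (1 + nu) * Dstar t p j k.
Proof.
move=> t0 p0 gp mu1 nu0 nu1 _ _ jk sjk nred.
have kj : k != j by rewrite eq_sym.
rewrite /DD (dd_eq gp jk) (dd_eq gp kj) /ltop /Kk /= ?andbT ?andbF ?orbF.
rewrite /Dstar /mj.
have d1 : t j <> t k by move/(gp_tt gp) => e; rewrite e eqxx in jk.
have d2 : t j <> p k by exact: (gp_tp gp).
have d3 : p j <> t k by move=> h; exact: (gp_tp gp (esym h)).
have d4 : p j <> p k by move/(gp_pp gp) => e; rewrite e eqxx in jk.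
apply: arith => //.
move=> [h1 h2 h3 h4]; apply: nred; split => //.
Qed.
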